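(* Let $\zeta$ be the Riemann zeta function (meromorphically continued) and $\eta(s)=\sum_{n\ge1}(-1)^{n-1}n^{-s}$ the Dirichlet eta function. Define, for large real $x$, $g(x)=\bigl|\ln|\ln\eta(x)|\bigr|$ and $h(x)=\ln|\zeta(\eta(x))|$. Then for every integer $n\ge0$, $$\lim_{x\to\infty}\frac{g^{n}(x)}{x}=\lim_{x\to\infty}\frac{h^{n}(x)}{x}=(\ln2)^n,$$ where $g^{n},h^{n}$ denote $n$-th iterates. *)

(* Defs.v *)
From Stdlib Require Import Reals.
From Coquelicot Require Import Coquelicot.
Open Scope R_scope.

(* Dirichlet eta function on real arguments:
   eta(s) = sum_{n>=1} (-1)^(n-1) n^(-s)   (index k = n-1). *)
Definition eta (s : R) : R :=
  Series (fun k : nat => (-1) ^ k * Rpower (INR (k + 1)) (- s)).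

(* Riemann zeta on real arguments: the Dirichlet series for s > 1, and for
   s <= 1 (s <> 1) its analytic continuation, given on Re s > 0 by the
   classical formula zeta(s) = eta(s) / (1 - 2^(1-s)). *)
Definition zeta (s : R) : R :=
  if Rlt_dec 1 s then Series (fun k : nat => Rpower (INR (k + 1)) (- s))
  else eta s / (1 - Rpower 2 (1 - s)).

Definition g (x : R) : R := Rabs (ln (Rabs (ln (eta x)))).
Definition h (x : R) : R := ln (Rabs (zeta (eta x))).

(* Main.v *)
Require Import Defs.
From Stdlib Require Import Reals Lra Lia ZArith.
From Coquelicot Require Import Coquelicot.
Open Scope R_scope.

Definition Un (x : R) (k : nat) : R := Rpower (INR (k + 1)) (- x).

Lemma exp_le' a b : a <= b -> exp a <= exp b.
Proof. intros [H|H]; [apply Rlt_le, exp_increasing; auto | subst; lra]. Qed.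

Lemma INR_k1_pos k : 0 < INR (k + 1).
Proof. rewrite plus_INR; simpl; pose proof (pos_INR k); lra. Qed.

Lemma Un_dec x : 0 < x -> Un_decreasing (Un x).
Proof.
  intros Hx k. unfold Un, Rpower. apply exp_le'.
  assert (ln (INR (k+1)) <= ln (INR (S k + 1))).
  { apply ln_le. apply INR_k1_pos. apply le_INR. lia. }
  nra.
Qed.

Lemma Un_cv0 x : 0 < x -> Un_cv (Un x) 0.
Proof.
  intros Hx eps Heps.
  set (Y := exp (- ln eps / x)).
  destruct (archimed Y) as [H1 _].
  assert (Hp : 0 < Y) by apply exp_pos.
  assert (0 < IZR (up Y)) by lra.
  exists (Z.to_nat (up Y)). intros n Hn. unfold Rdist.
  assert (Hk := INR_k1_pos n).
  assert (Hu : 0 < Un x n) by (unfold Un, Rpower; apply exp_pos).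
  rewrite Rminus_0_r, Rabs_pos_eq by lra.
  assert (IZR (up Y) <= INR n).
  { replace (IZR (up Y)) with (INR (Z.to_nat (up Y))).
    apply le_INR; lia. rewrite INR_IZR_INZ, Z2Nat.id; auto. apply Z.lt_le_incl, lt_0_IZR; lra. }
  assert (Y < INR (n+1)) by (rewrite plus_INR; simpl; lra).
  assert (ln Y < ln (INR (n+1))) by (apply ln_increasing; lra).
  unfold Y in H3. rewrite ln_exp in H3.
  assert (- ln eps < x * ln (INR (n + 1))).
  { apply (Rmult_lt_compat_l x) in H3; auto. field_simplify in H3; lra. }
  unfold Un, Rpower. rewrite <- (exp_ln eps) by lra. apply exp_increasing. lra.
Qed.

Lemma eta_bounds x : 0 < x ->
  1 - Rpower 2 (-x) <= eta x <= 1 - Rpower 2 (-x) + Rpower 3 (-x) /\ eta x <= 1.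
Proof.
  intros Hx.
  destruct (alternated_series (Un x) (Un_dec x Hx) (Un_cv0 x Hx)) as [l Hl].
  assert (E : eta x = l).
  { unfold eta. apply is_series_unique. apply is_series_Reals. exact Hl. }
  rewrite E.
  pose proof (alternated_series_ineq (Un x) l 0 (Un_dec x ltac:(lra)) (Un_cv0 x Hx) Hl) as [A _].
  pose proof (alternated_series_ineq (Un x) l 1 (Un_dec x ltac:(lra)) (Un_cv0 x Hx) Hl) as [_ B].
  pose proof (alternated_series_ineq (Un x) l 0 (Un_dec x ltac:(lra)) (Un_cv0 x Hx) Hl) as [_ B0].
  simpl in A, B, B0. unfold tg_alt, Un in B0; simpl in B0.
  replace (Rpower 1 (-x)) with 1 in B0 by (unfold Rpower; rewrite ln_1, Rmult_0_r, exp_0; auto). unfold tg_alt, Un in A, B. simpl in A, B.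
  replace (Rpower 1 (-x)) with 1 in A, B by (unfold Rpower; rewrite ln_1, Rmult_0_r, exp_0; auto).
  replace (1+1) with 2 in A, B by lra. replace (2+1) with 3 in B by lra.
  lra.
Qed.

Lemma ln_le_sub1 y : 0 < y -> ln y <= y - 1.
Proof. intros. pose proof (exp_ineq1_le (ln y)). rewrite exp_ln in H0; lra. Qed.

Lemma ln2_pos : 0 < ln 2.
Proof. pose proof ln_lt_2; lra. Qed.

Lemma ln2_lt1 : ln 2 < 1.
Proof.
  pose proof (exp_ineq1 1 ltac:(lra)). rewrite <- (ln_exp 1).
  apply ln_increasing; lra.
Qed.

Lemma e_bounds x : 2 <= x ->
  exp (- x * ln 2) / 2 <= 1 - eta x <= exp (- x * ln 2) /\ exp (- x * ln 2) <= / 4.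
Proof.
  intros Hx. pose proof (eta_bounds x ltac:(lra)) as [[A B] _].
  unfold Rpower in A, B.
  pose proof ln2_pos.
  assert (H3 : ln 3 - ln 2 >= ln 2 / 2).
  { assert (ln (2*2*2) < ln (3*3)) by (apply ln_increasing; lra).
    rewrite !ln_mult in H0 by lra. lra. }
  assert (exp (- x * ln 3) <= exp (- x * ln 2) / 2).
  { unfold Rdiv. rewrite <- (exp_ln 2) at 2 by lra. rewrite <- exp_Ropp, <- exp_plus.
    apply exp_le'. nra. }
  split. lra.
  rewrite <- (exp_ln 4) by lra. rewrite <- exp_Ropp. apply exp_le'.
  replace 4 with (2*2) by lra. rewrite ln_mult by lra. nra.
Qed.

Lemma inv_1m e : 0 <= e <= 1/2 -> / (1 - e) <= 1 + 2 * e.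
Proof.
  intros. apply (Rmult_le_reg_r (1 - e)); [lra|]. rewrite Rinv_l by lra. nra.
Qed.

Lemma g_bound x : 2 <= x -> Rabs (g x - ln 2 * x) <= ln 2.
Proof.
  intros Hx. destruct (e_bounds x Hx) as [[A B] C].
  set (u := exp (- x * ln 2)) in *.
  assert (Hu : 0 < u) by apply exp_pos.
  assert (Hlu : ln u = - x * ln 2) by (unfold u; apply ln_exp).
  pose proof ln2_pos.
  set (e := 1 - eta x) in *.
  assert (Eeta : eta x = 1 - e) by (unfold e; ring).
  unfold g. rewrite Eeta.
  assert (L1 : ln (1 - e) <= - e) by (pose proof (ln_le_sub1 (1-e) ltac:(lra)); lra).
  assert (L2 : - ln (1 - e) <= 2 * e).
  { rewrite <- ln_Rinv by lra. pose proof (ln_le_sub1 (/(1-e)) ltac:(apply Rinv_0_lt_compat; lra)).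
    pose proof (inv_1m e ltac:(lra)). lra. }
  rewrite (Rabs_left (ln (1 - e))) by lra.
  assert (M1 : ln e <= ln (- ln (1 - e))) by (apply ln_le; lra).
  assert (M2 : ln (- ln (1 - e)) <= ln 2 + ln e) by (rewrite <- ln_mult by lra; apply ln_le; lra).
  assert (M3 : ln u - ln 2 <= ln e).
  { replace (ln u - ln 2) with (ln (u / 2)). apply ln_le; lra.
    unfold Rdiv. rewrite ln_mult, ln_Rinv; lra. }
  assert (M4 : ln e <= ln u) by (apply ln_le; lra).
  rewrite (Rabs_left (ln (- ln (1 - e)))) by nra.
  apply Rabs_le; lra.
Qed.

Definition Kc := 1 - exp (-(3/4) * ln 2).

Lemma h_bound x : 2 <= x -> Rabs (h x - ln 2 * x) <= Rabs (ln Kc) + ln 2 + Rabs (ln (ln 2)).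
Proof.
  intros Hx. destruct (e_bounds x Hx) as [[A B] C].
  set (u := exp (- x * ln 2)) in *.
  assert (Hu : 0 < u) by apply exp_pos.
  assert (Hlu : ln u = - x * ln 2) by (unfold u; apply ln_exp).
  pose proof ln2_pos. pose proof ln2_lt1.
  set (e := 1 - eta x) in *.
  assert (Eeta : eta x = 1 - e) by (unfold e; ring).
  unfold h, zeta. rewrite Eeta.
  destruct (Rlt_dec 1 (1 - e)) as [Hc|_]; [lra|].
  replace (1 - (1 - e)) with e by ring.
  assert (Ke : Kc <= eta (1 - e) <= 1).
  { destruct (eta_bounds (1 - e) ltac:(lra)) as [[A1 _] A2]. split; [|lra].
    unfold Rpower in A1. unfold Kc. assert (exp (- (1 - e) * ln 2) <= exp (-(3/4) * ln 2)).
    { apply exp_le'. nra. } lra. }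
  assert (Kpos : 0 < Kc).
  { unfold Kc. rewrite <- exp_0 at 1. pose proof (exp_increasing (-(3/4) * ln 2) 0 ltac:(nra)). lra. }
  assert (LK1 : ln Kc <= ln (eta (1 - e))) by (apply ln_le; lra).
  assert (LK2 : ln (eta (1 - e)) <= 0) by (rewrite <- ln_1; apply ln_le; lra).
  unfold Rpower. set (t := e * ln 2).
  assert (Ht : 0 < t <= 1/4) by (unfold t; nra).
  assert (T1 : 1 + t <= exp t) by apply exp_ineq1_le.
  assert (T2 : exp t <= 1 + 2 * t).
  { pose proof (exp_ineq1_le (- t)). rewrite exp_Ropp in H1.
    assert (exp t <= / (1 - t)).
    { rewrite <- (Rinv_inv (exp t)). apply Rinv_le_contravar; lra. }
    pose proof (inv_1m t ltac:(lra)). lra. }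
  assert (Eabs : Rabs (eta (1 - e) / (1 - exp t)) = eta (1 - e) / (exp t - 1)).
  { replace (eta (1 - e) / (1 - exp t)) with (- (eta (1 - e) / (exp t - 1))).
    - rewrite Rabs_Ropp, Rabs_pos_eq; [auto|]. apply Rlt_le, Rdiv_lt_0_compat; lra.
    - field. split; lra. }
  rewrite Eabs. rewrite ln_div by lra.
  assert (N1 : ln t <= ln (exp t - 1)) by (apply ln_le; lra).
  assert (N2 : ln (exp t - 1) <= ln 2 + ln t) by (rewrite <- ln_mult by lra; apply ln_le; lra).
  assert (Nt : ln t = ln e + ln (ln 2)) by (unfold t; apply ln_mult; lra).
  assert (M3 : ln u - ln 2 <= ln e).
  { replace (ln u - ln 2) with (ln (u / 2)). apply ln_le; lra.
    unfold Rdiv. rewrite ln_mult, ln_Rinv; lra. }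
  assert (M4 : ln e <= ln u) by (apply ln_le; lra).
  pose proof (Rle_abs (ln (ln 2))) as Q1. pose proof (Rle_abs (- ln (ln 2))) as Q2. rewrite Rabs_Ropp in Q2.
  pose proof (Rle_abs (- ln Kc)) as Q3. rewrite Rabs_Ropp in Q3.
  apply Rabs_le; split; nra.
Qed.

Lemma iter_bound (f : R -> R) c C x0 : 0 < c ->
  (forall x, x0 <= x -> Rabs (f x - c * x) <= C) ->
  forall n, exists B X, forall x, X <= x -> Rabs (Nat.iter n f x - c ^ n * x) <= B.
Proof.
  intros Hc Hf n. induction n as [|n IH].
  - exists 0, 0. intros x _. simpl. replace (x - 1 * x) with 0 by ring. rewrite Rabs_R0; lra.
  - destruct IH as [B [X HB]].
    assert (Hcn : 0 < c ^ n) by (apply pow_lt; auto).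
    exists (C + c * B), (Rmax X ((x0 + B) / c ^ n)). intros x Hx.
    pose proof (Rmax_l X ((x0 + B) / c ^ n)). pose proof (Rmax_r X ((x0 + B) / c ^ n)).
    specialize (HB x ltac:(lra)).
    set (y := Nat.iter n f x) in *.
    assert (Hy : x0 <= y).
    { assert (x0 + B <= c ^ n * x).
      { assert (H5 : (x0 + B) / c ^ n <= x) by lra.
        apply (Rmult_le_compat_l (c ^ n)) in H5; [|lra].
        replace (c ^ n * ((x0 + B) / c ^ n)) with (x0 + B) in H5 by (field; lra). lra. }
      pose proof (Rle_abs (-(y - c ^ n * x))). rewrite Rabs_Ropp in H2. lra. }
    simpl. fold y.
    replace (f y - c * c ^ n * x) with ((f y - c * y) + c * (y - c ^ n * x)) by ring.
    eapply Rle_trans; [apply Rabs_triang|].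
    rewrite Rabs_mult, (Rabs_pos_eq c) by lra.
    specialize (Hf y Hy). nra.
Qed.

Lemma lim_of_bound (F : R -> R) L :
  (exists B X, forall x, X <= x -> Rabs (F x - L * x) <= B) ->
  is_lim (fun x => F x / x) p_infty (Finite L).
Proof.
  intros [B [X HB]]. apply is_lim_spec. intros eps.
  exists (Rmax X (Rmax 1 (B / eps))). intros x Hx.
  pose proof (Rmax_l X (Rmax 1 (B / eps))). pose proof (Rmax_r X (Rmax 1 (B / eps))).
  pose proof (Rmax_l 1 (B / eps)). pose proof (Rmax_r 1 (B / eps)).
  pose proof (cond_pos eps).
  assert (Hx0 : 0 < x) by lra.
  specialize (HB x ltac:(lra)).
  replace (F x / x - L) with ((F x - L * x) / x) by (field; lra).
  unfold Rdiv. rewrite Rabs_mult, (Rabs_pos_eq (/ x)) by (apply Rlt_le, Rinv_0_lt_compat; lra).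
  apply (Rmult_lt_reg_r x); auto. rewrite Rmult_assoc, Rinv_l, Rmult_1_r by lra.
  assert (B < eps * x).
  { assert (B / eps < x) by lra. apply (Rmult_lt_compat_l eps) in H4; auto.
    replace (eps * (B / eps)) with B in H4 by (field; lra). lra. }
  lra.
Qed.

Theorem mainTheorem9 : forall n : nat,
  is_lim (fun x => Nat.iter n g x / x) p_infty (Finite (ln 2 ^ n)) /\
  is_lim (fun x => Nat.iter n h x / x) p_infty (Finite (ln 2 ^ n)).
Proof.
  intros n. split; apply lim_of_bound.
  - exact (iter_bound g (ln 2) (ln 2) 2 ln2_pos g_bound n).
  - exact (iter_bound h (ln 2) _ 2 ln2_pos h_bound n).
Qed.
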